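(* Let $G$ be a BDH graph with color classes $X,Y$, with at least three vertices and no universal vertex. Then $x\in X$ is a cut-vertex of $G$ if and only if $(\{x\},N(x))\in\mathcal{B}(G)$. Analogously, $y\in Y$ is a cut-vertex of $G$ if and only if $(N(y),\{y\})\in\mathcal{B}(G)$.
   Context: A biclique of a bipartite graph is written as the pair $(U,W)$ of its shores, $U\subseteq X$, $W\subseteq Y$, with every vertex of $U$ adjacent to every vertex of $W$; $\mathcal{B}(G)$ is the set of inclusion-wise maximal bicliques. A graph is distance hereditary if distances in every connected induced subgraph equal distances in the graph; BDH means bipartite distance hereditary (equivalently: bipartite, no induced chordless cycle of length $\ge 6$, no induced domino, where a domino is $C_6$ plus a chord between antipodal vertices). A universal vertex is adjacent to all vertices of the opposite color class. *)

(* Defs.v *)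
From mathcomp Require Import all_boot.
Set Implicit Arguments. Unset Strict Implicit. Unset Printing Implicit Defensive.

Section Graphs.
Variable T : finType.
Variable e : rel T.

Definition simple_graph : Prop := symmetric e /\ irreflexive e.

Definition induced (S : {set T}) : rel T :=
  [rel u v | [&& u \in S, v \in S & e u v]].

Definition dist_le (S : {set T}) (x y : T) (k : nat) : Prop :=
  exists p : seq T, [/\ size p <= k, path (induced S) x p & last x p = y].

Definition is_dist (S : {set T}) (x y : T) (d : nat) : Prop :=
  dist_le S x y d /\ forall k, dist_le S x y k -> d <= k.

Definition connected_on (S : {set T}) : Prop :=
  forall x y, x \in S -> y \in S -> connect (induced S) x y.

Definition connected_graph : Prop := connected_on setT.

Definition distance_hereditary : Prop :=
  connected_graph /\
  forall S : {set T}, connected_on S ->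
    forall x y d, x \in S -> y \in S -> (is_dist setT x y d <-> is_dist S x y d).

Definition bipartite_with (X : {set T}) : Prop :=
  forall u v, e u v -> (u \in X) != (v \in X).

Definition BDH (X : {set T}) : Prop :=
  simple_graph /\ bipartite_with X /\ distance_hereditary.

Definition nbhd (v : T) : {set T} := [set w | e v w].

Definition universal (X : {set T}) (v : T) : Prop :=
  forall w, (w \in X) != (v \in X) -> e v w.

Definition cut_vertex (v : T) : Prop :=
  exists u w, [/\ u != v, w != v, connect (induced setT) u w
                & ~~ connect (induced [set~ v]) u w].

Definition biclique (X U W : {set T}) : Prop :=
  [/\ U \subset X, W \subset ~: X & forall u w, u \in U -> w \in W -> e u w].

Definition maximal_biclique (X U W : {set T}) : Prop :=
  biclique X U W /\
  forall U' W', biclique X U' W' -> U \subset U' -> W \subset W' ->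
    U' = U /\ W' = W.

End Graphs.

(* Main.v *)
Require Import Defs.
From mathcomp Require Import all_boot zify.
From Stdlib Require Import Classical.
Set Implicit Arguments. Unset Strict Implicit. Unset Printing Implicit Defensive.

Section Core.
Variable T : finType.
Variable e : rel T.
Hypothesis esym : symmetric e.
Hypothesis eirr : irreflexive e.
Variable X : {set T}.
Hypothesis bip : bipartite_with e X.

Lemma nadj u v : (u \in X) = (v \in X) -> ~~ e u v.
Proof. by move=> H; apply/negP => /bip; rewrite H eqxx. Qed.

Lemma induced_sym S : symmetric (induced e S).
Proof. move=> u v; rewrite /induced /= esym; by case: (u \in S); case: (v \in S). Qed.

Lemma is_dist2 (S : {set T}) u c v : u != v -> ~~ e u v -> u \in S -> c \in S -> v \in S ->
  e u c -> e c v -> is_dist e S u v 2.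
Proof.
move=> nuv nuv' uS cS vS uc cv; split.
  by exists [:: c; v]; split => //=; rewrite /induced /= uS cS vS uc cv.
move=> k [p [Hs Hp Hl]].
case: p Hs Hp Hl => [|a [|b p]] /=.
- by move=> _ _ Hl; rewrite Hl eqxx in nuv.
- move=> _; rewrite /induced /= andbT => /and3P [_ _ ua] Hl; by rewrite -Hl ua in nuv'.
- by move=> Hs _ _; apply: leq_trans Hs.
Qed.


Lemma reroute x x' : x' != x -> nbhd e x \subset nbhd e x' ->
  forall a b, a != x -> b != x -> connect (induced e setT) a b ->
  connect (induced e [set~ x]) a b.
Proof.
move=> nx' sub a b ax bx /connectP [p Hp Hl].
pose f u := if u == x then x' else u.
have fx u : f u != x by rewrite /f; case: (eqVneq u x).
have Hf u v : e u v -> induced e [set~ x] (f u) (f v).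
  move=> uv; rewrite /induced /= !in_setC1 !fx /=.
  rewrite /f; have [eu|ux] := eqVneq u x; have [ev|vx] := eqVneq v x.
  - by rewrite eu ev eirr in uv.
  - have : v \in nbhd e x by rewrite inE -eu.
    by move/(subsetP sub); rewrite inE.
  - have : u \in nbhd e x by rewrite inE esym -ev.
    by move/(subsetP sub); rewrite inE esym.
  - exact: uv.
have Hm : forall a0, path (induced e setT) a0 p -> path (induced e [set~ x]) (f a0) (map f p).
  elim: p {Hp Hl} => [|c p IH] a0 //= /andP [/and3P [_ _ ac] Hp].
  by rewrite Hf // IH.
apply/connectP; exists (map f p); first by have := Hm a Hp; rewrite /f (negbTE ax).
have fa : f a = a by rewrite /f (negbTE ax).
have fb : f b = b by rewrite /f (negbTE bx).
by rewrite -{1}fa last_map -Hl fb.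
Qed.


Lemma side u v : e u v -> (v \in X) = ~~ (u \in X).
Proof. by move/bip; case: (u \in X); case: (v \in X). Qed.

Lemma first_step (S : {set T}) a b : a != b -> connect (induced e S) a b ->
  exists c, [/\ c \in S, a \in S & e a c].
Proof.
move=> ab /connectP [[|c p] Hp Hl]; first by rewrite Hl eqxx in ab.
move: Hp => /= /andP [H _]; move: H; rewrite /induced /= => /and3P [aS cS ac].
by exists c.
Qed.

Hypothesis DH : distance_hereditary e.
Hypothesis card3 : 3 <= #|T|.

Lemma nbhd_ne x : exists y, e x y.
Proof.
have : 0 < #|[set~ x]| by rewrite cardsC1; move: card3; lia.
case/card_gt0P => u; rewrite in_setC1 => ux.
have := DH.1 x u (in_setT x) (in_setT u).
case/(first_step _); first by rewrite eq_sym.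
by move=> c [_ _ xc]; exists c.
Qed.

Lemma noncut_twin x :
  (forall u w, u != x -> w != x -> connect (induced e [set~ x]) u w) ->
  exists x', x' != x /\ nbhd e x \subset nbhd e x'.
Proof.
move=> Hc.
have HcS : connected_on e [set~ x].
  by move=> u w; rewrite !in_setC1; apply: Hc.
have [y0 xy0] := nbhd_ne x.
have y0x : y0 != x by apply/eqP => E; rewrite E eirr in xy0.
have : 0 < #|[set~ x] :\ y0|.
  move: (cardsD1 y0 [set~ x]); rewrite cardsC1 in_setC1 y0x.
  by move: card3; lia.
case/card_gt0P => w; rewrite !inE => /andP [wy0 wx].
have := Hc y0 w y0x wx.
case/(first_step _); first by rewrite eq_sym.
move=> c [cS _ y0c]; rewrite in_setC1 in cS.
case: (@arg_maxnP _ c (fun z => z != x) (fun z => #|nbhd e z :&: nbhd e x|) cS).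
move=> x' x'x Hmax; exists x'; split => //.
apply/subsetP => y; rewrite !inE => xy; apply/negPn/negP => nx'y.
have : 0 < #|nbhd e x' :&: nbhd e x|.
  apply: leq_trans (Hmax c cS); apply/card_gt0P; exists y0.
  by rewrite !inE xy0 esym y0c.
case/card_gt0P => y'; rewrite !inE => /andP [x'y' xy'].
have yy' : y != y' by apply/eqP => E; rewrite E x'y' in nx'y.
have sy : (y \in X) = (y' \in X) by rewrite (side xy) (side xy').
have d1 : is_dist e setT y y' 2.
  by apply: (is_dist2 yy' (nadj sy) (in_setT y) (in_setT x) (in_setT y') _ xy'); rewrite esym.
have yS : y \in [set~ x] by rewrite in_setC1; apply/eqP => E; rewrite E eirr in xy.
have y'S : y' \in [set~ x] by rewrite in_setC1; apply/eqP => E; rewrite E eirr in xy'.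
have [[p [Hs Hp Hl]] _] := (DH.2 _ HcS y y' 2 yS y'S).1 d1.
have [z [zx yz zy']] : exists z, [/\ z != x, e y z & e z y'].
  case: p Hs Hp Hl => [|a [|b [|q]]] //=.
  - by move=> _ _ E; rewrite E eqxx in yy'.
  - move=> _; rewrite /induced /= andbT => /and3P [_ _ ya] E.
    by move: ya; rewrite E (negbTE (nadj sy)).
  - rewrite /induced /= andbT => _ /andP [/and3P [_ aS ya] /and3P [_ _ ab]] E.
    by exists a; rewrite -in_setC1 aS ya -E ab.
case: (boolP (nbhd e x' :&: nbhd e x \subset nbhd e z)) => Hsub.
  have : nbhd e x' :&: nbhd e x \proper nbhd e z :&: nbhd e x.
    apply/properP; split.
      apply/subsetP => t tI; rewrite inE (subsetP Hsub _ tI).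
      by move: tI; rewrite inE => /andP [].
    by exists y; rewrite !inE; [rewrite esym yz xy | rewrite (negbTE nx'y)].
  by move/proper_card; apply/negP; rewrite -leqNgt; exact: Hmax.
case/subsetPn: Hsub => y''; rewrite !inE => /andP [x'y'' xy''] zy''.
pose S2 := [set y; z; y'; x'; y''].
have inS2 : [/\ y \in S2, z \in S2, y' \in S2, x' \in S2 & y'' \in S2].
  by rewrite !inE !eqxx !orbT.
case: inS2 => iy iz iy' ix' iy''.
have step u v : u \in S2 -> v \in S2 -> e u v -> connect (induced e S2) u v.
  by move=> uS vS uv; apply: connect1; rewrite /induced /= uS vS uv.
have Hy : forall t, t \in S2 -> connect (induced e S2) y t.
  have c1 := step _ _ iy iz yz.
  have c2 := connect_trans c1 (step _ _ iz iy' zy').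
  have c3 := connect_trans c2 (step _ _ iy' ix' (etrans (esym _ _) x'y')).
  have c4 := connect_trans c3 (step _ _ ix' iy'' x'y'').
  move=> t; rewrite !inE => /orP [/orP [/orP [/orP [/eqP -> | /eqP ->] | /eqP ->] | /eqP ->] | /eqP ->] //.
have HS2 : connected_on e S2.
  move=> u v uS vS; apply: connect_trans (Hy v vS).
  by rewrite (sym_connect_sym (induced_sym S2)); apply: Hy.
have yy'' : y != y'' by apply/eqP => E; rewrite E x'y'' in nx'y.
have sy2 : (y \in X) = (y'' \in X) by rewrite (side xy) (side xy'').
have d2 : is_dist e setT y y'' 2.
  by apply: (is_dist2 yy'' (nadj sy2) (in_setT y) (in_setT x) (in_setT y'') _ xy''); rewrite esym.
have [[q [Hs2 Hq Hl2]] _] := (DH.2 _ HS2 y y'' 2 iy iy'').1 d2.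
case: q Hs2 Hq Hl2 => [|a [|b [|r]]] //=.
- by move=> _ _ E; rewrite E eqxx in yy''.
- move=> _; rewrite /induced /= andbT => /and3P [_ _ ya] E.
  by move: ya; rewrite E (negbTE (nadj sy2)).
- rewrite /induced /= andbT => _ /andP [/and3P [_ aS ya] /and3P [_ _ ab]] E.
  rewrite E in ab; move: aS; rewrite !inE => /orP [/orP [/orP [/orP [/eqP Ea | /eqP Ea] | /eqP Ea] | /eqP Ea] | /eqP Ea]; rewrite Ea in ya ab.
  + by rewrite eirr in ya.
  + by rewrite ab in zy''.
  + by move: ya; move: (nadj sy) => /negbTE ->.
  + by rewrite esym ya in nx'y.
  + by rewrite eirr in ab.
Qed.

End Core.

Theorem lemma3 (T : finType) (e : rel T) (X : {set T}) :
  BDH e X -> 3 <= #|T| -> (forall v, ~ universal e X v) ->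
  (forall x, x \in X ->
     (cut_vertex e x <-> maximal_biclique e X [set x] (nbhd e x))) /\
  (forall y, y \in ~: X ->
     (cut_vertex e y <-> maximal_biclique e X (nbhd e y) [set y])).
Proof.
move=> [[esym eirr] [bip DH]] card3 _.
have key : forall x, cut_vertex e x <->
    ~ exists x', x' != x /\ nbhd e x \subset nbhd e x'.
  move=> x; split.
    case=> u [w [ux wx cuw ncuw]] [x' [x'x sub]].
    by rewrite (reroute esym eirr x'x sub ux wx cuw) in ncuw.
  move=> H; apply: NNPP => Hnc; apply: H.
  apply: (noncut_twin esym eirr bip DH card3) => u w ux wx.
  apply/negPn/negP => Hn; apply: Hnc; exists u, w; split => //.
  exact: DH.1 u w (in_setT u) (in_setT w).
split.
- move=> x xX; rewrite key.
  have Hb : biclique e X [set x] (nbhd e x).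
    split; first by rewrite sub1set.
      by apply/subsetP => t; rewrite !inE => /(side bip) ->; rewrite xX.
    by move=> u w; rewrite !inE => /eqP ->.
  apply: iff_sym; split.
  + move=> [_ Hm] [x' [x'x sub]].
    have [y xy] := nbhd_ne DH card3 x.
    have x'y : e x' y by move: (subsetP sub y); rewrite !inE; apply.
    have x'X : x' \in X.
      by move: (side bip xy) (side bip x'y) => ->; rewrite xX; case: (x' \in X).
    have Hb' : biclique e X [set x; x'] (nbhd e x).
      split; first by apply/subsetP => t; rewrite !inE => /orP [] /eqP ->.
        by case: Hb.
      move=> u w; rewrite !inE => /orP [] /eqP -> // xw.
      by move: (subsetP sub w); rewrite !inE; apply.
    have [E _] := Hm _ _ Hb' (subsetUl [set x] [set x']) (subxx _).
    have : x' \in [set x; x'] by rewrite !inE eqxx orbT.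
    rewrite E inE => /eqP Ex.
    by rewrite Ex eqxx in x'x.
  + move=> H; split => // U' W' [UX WX Hr] sU sW.
    have xU : x \in U' by rewrite -sub1set.
    split.
      apply/setP => t; rewrite inE; apply/idP/eqP => [tU|->//].
      apply/eqP/negPn/negP => tx; apply: H; exists t; split => //.
      apply/subsetP => w wN; rewrite inE; apply: Hr => //.
      exact: (subsetP sW).
    apply/setP => t; apply/idP/idP => [tW|]; last exact: (subsetP sW).
    by rewrite inE; apply: Hr.
- move=> y yY; rewrite key.
  have yX : (y \in X) = false by move: yY; rewrite inE => /negbTE.
  have Hb : biclique e X (nbhd e y) [set y].
    split; last by move=> u w uN; rewrite inE => /eqP ->; rewrite esym; move: uN; rewrite inE.
      by apply/subsetP => t; rewrite !inE => /(side bip) ->; rewrite yX.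
    by rewrite sub1set.
  apply: iff_sym; split.
  + move=> [_ Hm] [y' [y'y sub]].
    have [x yx] := nbhd_ne DH card3 y.
    have y'x : e y' x by move: (subsetP sub x); rewrite !inE; apply.
    have y'X : (y' \in X) = false.
      by move: (side bip yx) (side bip y'x) => ->; rewrite yX; case: (y' \in X).
    have Hb' : biclique e X (nbhd e y) [set y; y'].
      split; first by case: Hb.
        by apply/subsetP => t; rewrite !inE => /orP [] /eqP ->; rewrite ?yX ?y'X.
      move=> u w; rewrite !inE => yu /orP [] /eqP ->; first by rewrite esym.
      by have := subsetP sub u; rewrite !inE => /(_ yu); rewrite esym.
    have [_ E] := Hm _ _ Hb' (subxx _) (subsetUl [set y] [set y']).
    have : y' \in [set y; y'] by rewrite !inE eqxx orbT.
    rewrite E inE => /eqP Ey.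
    by rewrite Ey eqxx in y'y.
  + move=> H; split => // U' W' [UX WX Hr] sU sW.
    have yW : y \in W' by rewrite -sub1set.
    split; last first.
      apply/setP => t; rewrite inE; apply/idP/eqP => [tW|->//].
      apply/eqP/negPn/negP => ty; apply: H; exists t; split => //.
      apply/subsetP => u uN; rewrite inE esym; apply: Hr => //.
      exact: (subsetP sU).
    apply/setP => t; apply/idP/idP => [tU|]; last exact: (subsetP sU).
    by rewrite inE esym; apply: Hr.
Qed.
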